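(* Given a fair division instance with $3$ agents, $4$ items, and normalised additive valuations, an EQ $+$ EQ1 allocation may not exist.
   Context: Fair division of indivisible goods among agents with additive valuations $v_i$. Valuations are normalised if every agent assigns the same value to the full set of items. An (integral) allocation $A=(A_1,\dots,A_n)$ is EQ1 (equitable up to one good) if for every pair of agents $i,j$ with $A_i\neq\emptyset$ there is a good $g\in A_i$ with $v_i(A_i\setminus\{g\})\le v_j(A_j)$. An EQ $+$ EQ1 allocation is a randomized allocation (a probability distribution over integral allocations) that is ex ante equitable, i.e. all agents have equal expected value $\mathbb{E}[v_i(X_i)]$, and whose support consists only of EQ1 integral allocations. *)

(* Defs.v *)
From mathcomp Require Import all_boot all_order all_algebra.
Set Implicit Arguments. Unset Strict Implicit. Unset Printing Implicit Defensive.
Import Order.TTheory GRing.Theory Num.Theory.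
Local Open Scope ring_scope.

Definition val (R : numDomainType) (n m : nat) (v : 'I_n -> 'I_m -> R)
  (i : 'I_n) (S : {set 'I_m}) : R := \sum_(g in S) v i g.

Definition nonneg_vals (R : numDomainType) (n m : nat) (v : 'I_n -> 'I_m -> R) :=
  forall i g, 0 <= v i g.

Definition normalised (R : numDomainType) (n m : nat) (v : 'I_n -> 'I_m -> R) :=
  forall i j, val v i setT = val v j setT.

Definition allocation (n m : nat) := {ffun 'I_m -> 'I_n}.

Definition bundle (n m : nat) (a : allocation n m) (i : 'I_n) : {set 'I_m} :=
  [set g | a g == i].

Definition EQ1 (R : numDomainType) (n m : nat) (v : 'I_n -> 'I_m -> R)
  (a : allocation n m) : Prop :=
  forall i j, bundle a i != set0 ->
    exists2 g, g \in bundle a i &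
      val v i (bundle a i :\ g) <= val v j (bundle a j).

Definition distribution (R : numDomainType) (n m : nat)
  (p : {ffun allocation n m -> R}) : Prop :=
  (forall a, 0 <= p a) /\ \sum_a p a = 1.

Definition expected_val (R : numDomainType) (n m : nat) (v : 'I_n -> 'I_m -> R)
  (p : {ffun allocation n m -> R}) (i : 'I_n) : R :=
  \sum_a p a * val v i (bundle a i).

Definition EQ_EQ1 (R : numDomainType) (n m : nat) (v : 'I_n -> 'I_m -> R)
  (p : {ffun allocation n m -> R}) : Prop :=
  [/\ distribution p,
      (forall i j, expected_val v p i = expected_val v p j) &
      (forall a, 0 < p a -> EQ1 v a)].

(* Main.v *)
Require Import Defs.
From mathcomp Require Import all_boot all_order all_algebra.
Import Order.TTheory GRing.Theory Num.Theory.

Definition tbl : seq (seq nat) := [:: [:: 4;2;4;2]; [:: 1;3;1;7]; [:: 1;3;1;7]].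
Definition vn (i g : nat) : nat := nth 0 (nth [::] tbl i) g.

Definition sx (x : nat -> nat) (i : nat) : nat :=
  (x 0 == i) * vn i 0 + (x 1 == i) * vn i 1 + (x 2 == i) * vn i 2 + (x 3 == i) * vn i 3.

Definition weq1 (x : nat -> nat) : bool :=
  all (fun i => all (fun j =>
    ~~ has (fun g => x g == i) (iota 0 4) ||
    has (fun g => (x g == i) && (sx x i - vn i g <= sx x j)) (iota 0 4))
  (iota 0 3)) (iota 0 3).

Definition goodQ (x : nat -> nat) : bool :=
  weq1 x ==> (2 * sx x 0 < sx x 1 + sx x 2).

Lemma check (x : nat -> nat) : x 0 < 3 -> x 1 < 3 -> x 2 < 3 -> x 3 < 3 -> goodQ x.
Proof.
rewrite /goodQ /weq1 /sx /=.
case: (x 0) => [|[|[|n]]] //; case: (x 1) => [|[|[|n]]] //;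
case: (x 2) => [|[|[|n]]] //; case: (x 3) => [|[|[|n]]] //.
Qed.

Definition sb (a : allocation 3 4) (i : 'I_3) : nat := \sum_(h in bundle a i) vn i h.

Lemma sb_sx (a : allocation 3 4) (i : 'I_3) :
  sb a i = sx (fun g => nat_of_ord (a (inord g))) i.
Proof.
rewrite /sb big_mkcond /=.
rewrite (eq_bigr (fun g : 'I_4 => (nat_of_ord (a (inord g)) == i) * vn i g)).
  by rewrite !big_ord_recr big_ord0 /=.
move=> g _; rewrite inord_val inE.
case: ifP => /eqP; first by move=> ->; rewrite eqxx mul1n.
by move=> ne; rewrite (_ : (_ == _) = false) //; apply/eqP => /val_inj.
Qed.

Lemma key (a : allocation 3 4) :
  (forall i j : 'I_3, bundle a i != set0 ->
     exists2 g, g \in bundle a i &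
       \sum_(h in bundle a i :\ g) vn i h <= \sum_(h in bundle a j) vn j h) ->
  2 * sb a ord0 < sb a (inord 1) + sb a (inord 2).
Proof.
move=> H.
set x := fun g => nat_of_ord (a (inord g)).
have := @check x (ltn_ord _) (ltn_ord _) (ltn_ord _) (ltn_ord _).
rewrite /goodQ => /implyP hq.
rewrite !sb_sx -/x !inordK //; apply: hq.
apply/allP => i; rewrite mem_iota => /andP[_ hi]; apply/allP => j;
  rewrite mem_iota => /andP[_ hj].
rewrite -implyNb negbK; apply/implyP => /hasP [g gin /eqP xg].
pose I := Ordinal hi; pose J := Ordinal hj.
have ne : bundle a I != set0.
  apply/set0Pn; exists (inord g); rewrite inE; apply/eqP/val_inj; exact: xg.
have [g' g'in hle] := H I J ne.
apply/hasP; exists (nat_of_ord g'); first by rewrite mem_iota add0n ltn_ord.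
have xg' : x g' = i.
  by rewrite /x inord_val; move: g'in; rewrite inE => /eqP ->.
rewrite xg' eqxx /=.
change (sx x I - vn I g' <= sx x J).
rewrite -!sb_sx -/x /sb (big_setD1 _ g'in) /= addKn.
exact: hle.
Qed.

Local Open Scope ring_scope.

Definition vR (R : realFieldType) : 'I_3 -> 'I_4 -> R := fun i g => (vn i g)%:R.

Lemma valE (R : realFieldType) (i : 'I_3) S : Defs.val (vR R) i S = (\sum_(g in S) vn i g)%:R.
Proof. by rewrite /Defs.val natr_sum. Qed.

Lemma EQ1_pos (R : realFieldType) (a : allocation 3 4) : EQ1 (vR R) a ->
  (0 < Defs.val (vR R) (inord 1) (bundle a (inord 1)) + Defs.val (vR R) (inord 2) (bundle a (inord 2))
       - 2%:R * Defs.val (vR R) ord0 (bundle a ord0))%R.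
Proof.
move=> H; rewrite subr_gt0 !valE -natrD -natrM ltr_nat.
apply: key => i j ne.
have [g gin hle] := H i j ne.
exists g => //.
by move: hle; rewrite !valE ler_nat.
Qed.


Theorem mainTheorem1 (R : realFieldType) :
  exists v : 'I_3 -> 'I_4 -> R,
    [/\ nonneg_vals v, normalised v &
        ~ exists p : {ffun allocation 3 4 -> R}, EQ_EQ1 v p].
Proof.
exists (vR R); split.
- by move=> i g; rewrite /vR ler0n.
- have E : forall i : 'I_3, Defs.val (vR R) i setT = 12%:R.
    move=> i; rewrite valE.
    rewrite (eq_bigl (fun _ => true)); last by move=> g; rewrite in_setT.
    rewrite !big_ord_recr big_ord0 /=.
    by case: i => [[|[|[|n]]] hi].
  by move=> i j; rewrite !E.
move=> [p [[p0 p1] heq hsup]].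
pose d (a : allocation 3 4) := Defs.val (vR R) (inord 1) (bundle a (inord 1)) + Defs.val (vR R) (inord 2) (bundle a (inord 2))
       - 2%:R * Defs.val (vR R) ord0 (bundle a ord0).
have hs : \sum_a p a * d a = 0.
  rewrite /d.
  under eq_bigr do rewrite mulrBr mulrDr mulrCA.
  rewrite sumrB big_split /= -!mulr_sumr.
  have := heq (inord 1) ord0; have := heq (inord 2) ord0.
  rewrite /expected_val => -> ->.
  by rewrite mulr2n mulrDl !mul1r subrr.
have hnn : forall a, true -> 0 <= p a * d a.
  move=> a _; have := p0 a; rewrite le0r => /orP [/eqP -> | pa]; first by rewrite mul0r.
  by rewrite ltW // mulr_gt0 // (@EQ1_pos R a (hsup a pa)).
have h0 := psumr_eq0P hnn hs.
have : \sum_a p a = 0.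
  apply: big1 => a _.
  have := h0 a isT; have := p0 a; rewrite le0r => /orP [/eqP -> // | pa].
  by move/eqP; rewrite mulf_eq0 (gt_eqF pa) /= (gt_eqF (@EQ1_pos R a (hsup a pa))).
by rewrite p1 => /eqP; rewrite oner_eq0.
Qed.
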